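(* Let $G$ be a graph containing a triangle $u_1u_2u_3$ such that $d_G(u_1)=2$, $d_G(u_2)=3$ and $N_G(u_2)=\{u_1,u_3,u_4\}$. Let $D$ be an orientation of $G$ in which the edges incident with $u_1$ or $u_2$ are oriented as the arcs $(u_1,u_3)$, $(u_2,u_1)$, $(u_2,u_3)$, $(u_4,u_2)$, and let $D'=D-\{u_1,u_2\}$. Then $\mathrm{diff}(D)=\mathrm{diff}(D')$. In particular, $D$ is an AT-orientation if and only if $D'$ is an AT-orientation.
   Context: For an orientation $D$ of a graph, an Eulerian sub-digraph of $D$ is a spanning sub-digraph $F$ of $D$ with $d^+_F(v)=d^-_F(v)$ for every vertex $v$; $\mathrm{diff}(D)$ is the number of Eulerian sub-digraphs of $D$ with an even number of arcs minus the number with an odd number of arcs; $D$ is an AT-orientation if $\mathrm{diff}(D)\ne 0$. *)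

(* Defs.v *)
From mathcomp Require Import all_boot all_order all_algebra.
Set Implicit Arguments. Unset Strict Implicit. Unset Printing Implicit Defensive.
Import GRing.Theory Num.Theory.
Local Open Scope ring_scope.

Definition simple_graph (V : finType) (e : rel V) : Prop :=
  (forall x, ~~ e x x) /\ (forall x y, e x y = e y x).

Definition nbhd (V : finType) (e : rel V) (v : V) : {set V} := [set w | e v w].
Definition deg (V : finType) (e : rel V) (v : V) : nat := #|nbhd e v|.

Definition orientation (V : finType) (e : rel V) (d : rel V) : Prop :=
  (forall x y, d x y -> e x y) /\ (forall x y, e x y -> d x y (+) d y x).

Definition arcs_on (V : finType) (d : rel V) (S : {set V}) : {set V * V} :=
  [set a | [&& a.1 \in S, a.2 \in S & d a.1 a.2]].

Definition eulerian (V : finType) (F : {set V * V}) : bool :=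
  [forall v, #|[set a in F | a.1 == v]| == #|[set a in F | a.2 == v]|].

(* diff of the digraph d induced on S: (#even Eulerian spanning sub-digraphs)
   - (#odd ones), computed as a signed sum. *)
Definition diff_on (V : finType) (d : rel V) (S : {set V}) : int :=
  \sum_(F : {set V * V} | (F \subset arcs_on d S) && eulerian F) (-1) ^+ #|F|.

Definition AT_on (V : finType) (d : rel V) (S : {set V}) : Prop :=
  diff_on d S != 0.

(* Main.v *)
Require Import Defs.
From mathcomp Require Import all_boot all_order all_algebra.
From mathcomp Require Import zify.
Import GRing.Theory Num.Theory.

Lemma card_sumP (T : finType) (F : {set T}) (P : pred T) :
  #|[set x in F | P x]| = (\sum_(x in F) P x)%N.
Proof.
rewrite -sum1_card [RHS]big_mkcond [LHS]big_mkcond /=.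
apply: eq_bigr => x _; rewrite !inE; by case: (x \in F); case: (P x).
Qed.

Lemma sum_eq1 (T : finType) (F : {set T}) y :
  (\sum_(x in F) (x == y) = (y \in F))%N.
Proof.
case yF: (y \in F).
  rewrite (bigD1 y) //= eqxx big1 // => x /andP[_ /negbTE ->] //.
rewrite big1 // => x xF; case: eqP => // exy; by rewrite -exy xF in yF.
Qed.

Lemma eulerianE (T : finType) (F : {set T * T}) :
  eulerian F = [forall v, (\sum_(x in F) (x.1 == v) == \sum_(x in F) (x.2 == v))%N].
Proof.
apply: eq_forallb => v; by rewrite !card_sumP.
Qed.

Lemma card_symd (T : finType) (F X : {set T}) :
  (#|(F :\: X) :|: (X :\: F)| + 2 * #|F :&: X| = #|F| + #|X|)%N.
Proof.
have h := cardsUI (F :\: X) (X :\: F).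
have e0 : (F :\: X) :&: (X :\: F) = set0.
  apply/setP => x; rewrite !inE; by case: (x \in F); case: (x \in X).
rewrite e0 cards0 addn0 in h.
have h1 := cardsID X F. have h2 := cardsID F X.
rewrite setIC in h2. lia.
Qed.

Lemma symd_inv (T : finType) (X F : {set T}) :
  (((F :\: X) :|: (X :\: F)) :\: X) :|: (X :\: ((F :\: X) :|: (X :\: F))) = F.
Proof.
apply/setP => x; rewrite !inE; by case: (x \in F); case: (x \in X).
Qed.

Lemma symdI (T : finType) (X F : {set T}) :
  ((F :\: X) :|: (X :\: F)) :&: X = X :\: F.
Proof. apply/setP => x; rewrite !inE; by case: (x \in F); case: (x \in X). Qed.

Lemma symdD (T : finType) (X F : {set T}) :
  ((F :\: X) :|: (X :\: F)) :\: X = F :\: X.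
Proof. apply/setP => x; rewrite !inE; by case: (x \in F); case: (x \in X). Qed.

Lemma sum_ID (T : finType) (A B : {set T}) (g : T -> nat) :
  (\sum_(i in A) g i = \sum_(i in A :&: B) g i + \sum_(i in A :\: B) g i)%N.
Proof. exact: big_setID. Qed.

Lemma arith6 (o1 o2 o3 i1 i2 i3 : nat) :
  (o1 + i3 = i1 + o3 -> o1 + o2 = i1 + i2 -> o3 + o2 = i3 + i2)%N.
Proof. lia. Qed.

Lemma int_half (S : int) : S = (- S)%R -> S = 0%R.
Proof. move=> h; lia. Qed.
Local Open Scope ring_scope.
Theorem mainTheorem7 (V : finType) (e d : rel V) (u1 u2 u3 u4 : V) :
  simple_graph e ->
  e u1 u2 -> e u2 u3 -> e u1 u3 ->
  deg e u1 = 2%N -> deg e u2 = 3%N ->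
  nbhd e u2 = [set u1; u3; u4] ->
  orientation e d ->
  d u1 u3 -> d u2 u1 -> d u2 u3 -> d u4 u2 ->
  diff_on d [set: V] = diff_on d ([set: V] :\ u1 :\ u2) /\
  (AT_on d [set: V] <-> AT_on d ([set: V] :\ u1 :\ u2)).
Proof.
move=> [irr sym] e12 e23 e13 deg1 deg2 nb2 [de dx] d13 d21 d23 d42.
suff H : diff_on d [set: V] = diff_on d ([set: V] :\ u1 :\ u2).
  by split => //; rewrite /AT_on H.
have neq xx yy : e xx yy -> xx != yy.
  by move=> exy; apply/eqP => h; rewrite h (negbTE (irr yy)) in exy.
have ne12 := neq _ _ e12. have ne23 := neq _ _ e23. have ne13 := neq _ _ e13.
have ne42 := neq _ _ (de _ _ d42).
have nd12 : d u1 u2 = false by have := dx _ _ e12; rewrite d21; case: (d u1 u2).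
have nd32 : d u3 u2 = false.
  by have := dx _ _ (etrans (sym u3 u2) e23); rewrite d23; case: (d u3 u2).
have nd31 : d u3 u1 = false.
  by have := dx _ _ (etrans (sym u3 u1) e13); rewrite d13; case: (d u3 u1).
have nd24 : d u2 u4 = false.
  by have := dx _ _ (de _ _ d42); rewrite d42; case: (d u2 u4).
have nb1 : nbhd e u1 = [set u2; u3].
  apply/esym/eqP; rewrite eqEcard; apply/andP; split.
    by apply/subsetP => x; rewrite !inE => /orP[]/eqP->.
  by rewrite /deg in deg1; rewrite deg1 cards2 ne23.
have L1 p q : d p q -> p = u1 -> q = u3.
  move=> dpq ep; rewrite ep in dpq.
  have : q \in nbhd e u1 by rewrite inE de.
  rewrite nb1 !inE => /orP[]/eqP // eq; by rewrite eq nd12 in dpq.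
have L2 p q : d p q -> q = u1 -> p = u2.
  move=> dpq ep; rewrite ep in dpq.
  have : p \in nbhd e u1 by rewrite inE sym de.
  rewrite nb1 !inE => /orP[]/eqP // eq; by rewrite eq nd31 in dpq.
have L3 p q : d p q -> p = u2 -> q = u1 \/ q = u3.
  move=> dpq ep; rewrite ep in dpq.
  have : q \in nbhd e u2 by rewrite inE de.
  rewrite nb2 !inE => /orP[/orP[]|]/eqP eq; [by left|by right|].
  by rewrite eq nd24 in dpq.
have L4 p q : d p q -> q = u2 -> p = u4.
  move=> dpq ep; rewrite ep in dpq.
  have : p \in nbhd e u2 by rewrite inE sym de.
  rewrite nb2 !inE => /orP[/orP[]|]/eqP eq //.
    by rewrite eq nd12 in dpq.
  by rewrite eq nd32 in dpq.
set a := (u2, u1). set b := (u2, u3). set c := (u4, u2). set m := (u1, u3).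
have P1 x : d x.1 x.2 -> (x.1 == u1) = (x == m).
  case: x => p q /= dpq; apply/eqP/eqP => [h|[-> _]//].
  by rewrite h (L1 _ _ dpq h).
have P2 x : d x.1 x.2 -> (x.2 == u1) = (x == a).
  case: x => p q /= dpq; apply/eqP/eqP => [h|[_ ->]//].
  by rewrite h (L2 _ _ dpq h).
have P4 x : d x.1 x.2 -> (x.2 == u2) = (x == c).
  case: x => p q /= dpq; apply/eqP/eqP => [h|[_ ->]//].
  by rewrite h (L4 _ _ dpq h).
have P3 x : d x.1 x.2 -> (x.1 == u2) = (x == a) || (x == b).
  case: x => p q /= dpq; apply/eqP/orP => [h|[]/eqP[-> _]//].
  by case: (L3 _ _ dpq h) => ->; rewrite h; [left|right].
have P3n x : d x.1 x.2 -> ((x.1 == u2) = (x == a) + (x == b) :> nat)%N.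
  move=> dpq; rewrite (P3 _ dpq).
  case: (eqVneq x a) => [->|//]; rewrite /a /b !xpair_eqE eqxx /=.
  by rewrite (negbTE ne13).
set A := arcs_on d [set: V].
set A' := arcs_on d ([set: V] :\ u1 :\ u2).
have dF (F : {set V * V}) x : F \subset A -> x \in F -> d x.1 x.2.
  by move=> /subsetP sFA /sFA; rewrite inE => /and3P[].
have S1 (F : {set V * V}) : F \subset A -> (\sum_(x in F) (x.1 == u1) = (m \in F))%N.
  move=> sFA; rewrite -(@sum_eq1 _ F m); apply: eq_bigr => x xF; by rewrite P1 // (dF F).
have S2 (F : {set V * V}) : F \subset A -> (\sum_(x in F) (x.2 == u1) = (a \in F))%N.
  move=> sFA; rewrite -(@sum_eq1 _ F a); apply: eq_bigr => x xF; by rewrite P2 // (dF F).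
have S4 (F : {set V * V}) : F \subset A -> (\sum_(x in F) (x.2 == u2) = (c \in F))%N.
  move=> sFA; rewrite -(@sum_eq1 _ F c); apply: eq_bigr => x xF; by rewrite P4 // (dF F).
have S3 (F : {set V * V}) : F \subset A -> (\sum_(x in F) (x.1 == u2) = (a \in F) + (b \in F))%N.
  move=> sFA; rewrite -(@sum_eq1 _ F a) -(@sum_eq1 _ F b) -big_split; apply: eq_bigr => x xF.
  by rewrite P3n // (dF F).
have EU (F : {set V * V}) : F \subset A -> eulerian F ->
   (m \in F) = (a \in F) /\ ((a \in F) + (b \in F) = (c \in F))%N.
  move=> sFA; rewrite eulerianE => /forallP eF; split.
    by have /eqP := eF u1; rewrite S1 // S2 //; case: (m \in F); case: (a \in F).
  by have /eqP := eF u2; rewrite S3 // S4.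
have nF (F : {set V * V}) y x : y \notin F -> x \in F -> (x == y) = false.
  by move=> yF xF; apply/eqP => h; rewrite -h xF in yF.
rewrite /diff_on (bigID (fun F : {set V * V} => c \in F)) /=.
have -> : \sum_(F : {set V * V} | (F \subset A) && eulerian F && (c \notin F))
            (-1) ^+ #|F| =
          \sum_(F : {set V * V} | (F \subset A') && eulerian F) ((-1) ^+ #|F| : int).
  apply: eq_bigl => F; apply/idP/idP.
    move=> /andP[/andP[sFA eF] cF].
    have [ma abc] := EU F sFA eF.
    rewrite (negbTE cF) in abc.
    have aF : a \notin F by move: abc; case: (a \in F).
    have bF : b \notin F by move: abc; case: (b \in F); case: (a \in F).
    have mF : m \notin F by rewrite ma.
    rewrite eF andbT; apply/subsetP => x xF.
    have dxx := dF F x sFA xF.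
    rewrite !inE dxx andbT.
    rewrite (P1 _ dxx) (P2 _ dxx) (P3 _ dxx) (P4 _ dxx).
    by rewrite (nF _ _ _ aF xF) (nF _ _ _ bF xF) (nF _ _ _ mF xF) (nF _ _ _ cF xF).
  move=> /andP[sFA' ->]; rewrite andbT; apply/andP; split.
    apply: subset_trans sFA' _; apply/subsetP => x; rewrite !inE.
    by case/and3P.
  apply/negP => cF; have := subsetP sFA' _ cF; rewrite !inE /= eqxx.
  by rewrite andbF.
set X : {set V * V} := [set a; b; m].
pose f (F : {set V * V}) := (F :\: X) :|: (X :\: F).
have finv : involutive f.
  move=> F; exact: symd_inv.
have ab : (a == b) = false by rewrite /a /b xpair_eqE eqxx (negbTE ne13).
have am : (a == m) = false by rewrite /a /m xpair_eqE eq_sym (negbTE ne12).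
have bm : (b == m) = false by rewrite /b /m xpair_eqE eq_sym (negbTE ne12).
have ba : (b == a) = false by rewrite eq_sym ab.
have ma2 : (m == a) = false by rewrite eq_sym am.
have mb : (m == b) = false by rewrite eq_sym bm.
have cX : (c \in X) = false.
  by rewrite !inE /a /b /c /m !xpair_eqE (negbTE ne42) (negbTE ne23) !andbF.
have X3 : #|X| = 3%N.
  by rewrite /X setUC !cardsU1 cards1 !inE ab eq_sym am eq_sym bm.
have hs F : (-1) ^+ #|f F| = - ((-1) ^+ #|F|) :> int.
  have h := @card_symd _ F X; rewrite X3 in h.
  have : odd (#|f F| + 2 * #|F :&: X|) = odd (#|F| + 3) by rewrite h.
  rewrite !oddD /= !addbF addbb addbF addbT => ho.
  by rewrite -signr_odd ho -[in RHS]signr_odd; case: (odd #|F|); rewrite /= ?opprK ?expr1 ?expr0.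
have fI F : f F :&: X = X :\: F by exact: symdI.
have fD F : f F :\: X = F :\: X by exact: symdD.
have XA : X \subset A.
  by apply/subsetP => x; rewrite !inE => /orP[/orP[]|]/eqP->; rewrite /= ?d21 ?d23 ?d13.
have hQ (F : {set V * V}) : (F \subset A) && eulerian F && (c \in F) ->
            (f F \subset A) && eulerian (f F) && (c \in f F).
  move=> /andP[/andP[sFA eF] cF].
  have [ma abc] := EU F sFA eF; rewrite cF in abc.
  have cfF : c \in f F by rewrite /f in_setU !in_setD cX cF.
  have sfA : f F \subset A.
    apply/subsetP => x; rewrite /f in_setU !in_setD => /orP[/andP[_ xF]|/andP[_ xX]].
      exact: (subsetP sFA).
    exact: (subsetP XA).
  rewrite sfA cfF andbT /=.
  have key v : (\sum_(x in F :&: X) (x.1 == v) + \sum_(x in X :\: F) (x.2 == v) =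
                \sum_(x in F :&: X) (x.2 == v) + \sum_(x in X :\: F) (x.1 == v))%N.
    have hcase :
        ((a \in F) /\ (m \in F) /\ (b \notin F)) \/
        ((a \notin F) /\ (m \notin F) /\ (b \in F)).
      by move: abc; rewrite ma; case: (a \in F); case: (b \in F) => //= _; [left|right].
    case: hcase => [[aF [mF bF]] | [aF [mF bF]]].
    - have -> : F :&: X = a |: [set m].
        apply/setP => x; rewrite !inE.
        case: (eqVneq x a) => [->|xa]; first by rewrite aF ?eqxx ?ab ?ba ?am ?ma2 ?bm ?mb /= ?orbT ?andbT ?andbF.
        case: (eqVneq x m) => [->|xm]; first by rewrite mF ?eqxx ?ab ?ba ?am ?ma2 ?bm ?mb /= ?orbT ?andbT ?andbF.
        case: (eqVneq x b) => [->|xb]; first by rewrite (negbTE bF) ?eqxx ?ab ?ba ?am ?ma2 ?bm ?mb /= ?orbT ?andbT ?andbF.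
        by rewrite andbF.
      have -> : X :\: F = [set b].
        apply/setP => x; rewrite !inE.
        case: (eqVneq x a) => [->|xa]; first by rewrite aF ab ?eqxx ?ab ?ba ?am ?ma2 ?bm ?mb /= ?orbT ?andbT ?andbF.
        case: (eqVneq x m) => [->|xm]; first by rewrite mF eq_sym bm ?eqxx ?ab ?ba ?am ?ma2 ?bm ?mb /= ?orbT ?andbT ?andbF.
        case: (eqVneq x b) => [->|xb]; first by rewrite (negbTE bF) ?eqxx ?ab ?ba ?am ?ma2 ?bm ?mb /= ?orbT ?andbT ?andbF.
        by rewrite andbF.
      have nam : a \notin [set m] by rewrite inE am.
      rewrite !big_setU1 ?nam // !big_set1.
      by case: (u1 == v); case: (u2 == v); case: (u3 == v).
    - have -> : X :\: F = a |: [set m].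
        apply/setP => x; rewrite !inE.
        case: (eqVneq x a) => [->|xa]; first by rewrite aF ?eqxx ?ab ?ba ?am ?ma2 ?bm ?mb /= ?orbT ?andbT ?andbF.
        case: (eqVneq x m) => [->|xm]; first by rewrite mF ?eqxx ?ab ?ba ?am ?ma2 ?bm ?mb /= ?orbT ?andbT ?andbF.
        case: (eqVneq x b) => [->|xb]; first by rewrite bF ?eqxx ?ab ?ba ?am ?ma2 ?bm ?mb /= ?orbT ?andbT ?andbF.
        by rewrite andbF.
      have -> : F :&: X = [set b].
        apply/setP => x; rewrite !inE.
        case: (eqVneq x a) => [->|xa]; first by rewrite (negbTE aF) ab ?eqxx ?ab ?ba ?am ?ma2 ?bm ?mb /= ?orbT ?andbT ?andbF.
        case: (eqVneq x m) => [->|xm]; first by rewrite (negbTE mF) eq_sym bm ?eqxx ?ab ?ba ?am ?ma2 ?bm ?mb /= ?orbT ?andbT ?andbF.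
        case: (eqVneq x b) => [->|xb]; first by rewrite bF ?eqxx ?ab ?ba ?am ?ma2 ?bm ?mb /= ?orbT ?andbT ?andbF.
        by rewrite andbF.
      have nam : a \notin [set m] by rewrite inE am.
      rewrite !big_setU1 ?nam // !big_set1.
      by case: (u1 == v); case: (u2 == v); case: (u3 == v).
  rewrite eulerianE; apply/forallP => v; apply/eqP.
  have := eF; rewrite eulerianE => /forallP /(_ v) /eqP.
  rewrite !(@sum_ID _ F X) !(@sum_ID _ (f F) X) !fI !fD.
  exact: arith6 (key v).
have Z : \sum_(F : {set V * V} | (F \subset A) && eulerian F && (c \in F))
            ((-1) ^+ #|F| : int) = 0.
  apply: int_half.
  rewrite {1}(reindex_inj (inv_inj finv)) /= -sumrN.
  apply: eq_big => F.
    apply/idP/idP => [/hQ|/hQ //]; by rewrite finv.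
  by move=> _; exact: hs.
by rewrite Z add0r.
Qed.
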